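(* Consider the lift $\varphi\colon\mathrm{S}^{n-1}\to\Delta^{n-1}$, $\varphi(y)=y\odot y$ (entrywise square). It satisfies ''local $\Rightarrow$ local'' at every point, satisfies ''1 $\Rightarrow$ 1'' at $y$ if and only if $y_i\neq0$ for all $i$, and satisfies ''2 $\Rightarrow$ 1'' at every point.
   Context: $\mathrm{S}^{n-1}$ is the unit sphere in $\mathbb{R}^n$ and $\Delta^{n-1}=\{x\in\mathbb{R}^n: x\ge0,\ \sum_i x_i=1\}$. General setting: for a smooth manifold $\mathcal{M}$ and smooth $\varphi\colon\mathcal{M}\to\mathcal{E}$ with image $\mathcal{X}$, and a cost $f$, set $g=f\circ\varphi$. Tangent cone: $\mathrm{T}_x\mathcal{X}=\{\lim (x_i-x)/\tau_i: x_i\in\mathcal{X},\tau_i>0,\tau_i\to0\}$; $K^*=\{u:\langle u,v\rangle\ge0\ \forall v\in K\}$; $x$ is stationary for $f$ on $\mathcal{X}$ if $\nabla f(x)\in(\mathrm{T}_x\mathcal{X})^*$. $y$ is 1-critical for $g$ if $(g\circ c)'(0)=0$ for all smooth curves $c$ in $\mathcal{M}$ with $c(0)=y$, and 2-critical if moreover $(g\circ c)''(0)\ge0$ for all such curves. ''local $\Rightarrow$ local'' at $y$: for every continuous $f\colon\mathcal{X}\to\mathbb{R}$, if $y$ is a local minimum of $g$ then $\varphi(y)$ is a local minimum of $f$ on $\mathcal{X}$. ''$k\Rightarrow1$'' at $y$ ($k=1,2$): for every $k$-times differentiable $f\colon\mathcal{E}\to\mathbb{R}$, if $y$ is $k$-critical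 for $g$ then $\varphi(y)$ is stationary for $f$ on $\mathcal{X}$. *)

(* Defs.v *)
From HB Require Import structures.
From mathcomp Require Import all_boot all_order all_algebra.
From mathcomp Require Import all_classical all_reals topology normedtype sequences derive.
Set Implicit Arguments. Unset Strict Implicit. Unset Printing Implicit Defensive.
Import Order.TTheory GRing.Theory Num.Theory.
Import numFieldNormedType.Exports.
Local Open Scope classical_set_scope.
Local Open Scope ring_scope.

Section Defs.
Variables (R : realType) (n : nat).
Notation E := 'rV[R]_n.

Definition sphere : set E := [set y | \sum_(i < n) (y ord0 i) ^+ 2 = 1].

Definition simplex : set E :=
  [set x | (forall i, 0 <= x ord0 i) /\ \sum_(i < n) x ord0 i = 1].

Definition sqlift (y : E) : E := \row_i (y ord0 i) ^+ 2.

Definition smooth_curve_on (M : set E) (c : R -> E) : Prop :=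
  (forall t, M (c t)) /\ (forall k t, derivable (derive1n k c) t 1).

Definition local_min_on (X : set E) (h : E -> R) (x : E) : Prop :=
  X x /\ \forall z \near x, X z -> h x <= h z.

Definition tangent_cone (X : set E) (x : E) : set E :=
  [set v | exists (u : nat -> E) (tau : nat -> R),
     (forall k, X (u k)) /\ (forall k, 0 < tau k) /\
     tau @ \oo --> (0 : R) /\
     (fun k => (tau k)^-1 *: (u k - x)) @ \oo --> v].

(* x is stationary for f on X : grad f(x) lies in the dual cone of T_x X,
   i.e. <grad f(x), v> = Df(x)[v] >= 0 for all v in T_x X *)
Definition stationary (f : E -> R) (X : set E) (x : E) : Prop :=
  X x /\ forall v, tangent_cone X x v -> 0 <= 'd f x v.

Definition one_critical (g : E -> R) (y : E) : Prop :=
  sphere y /\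
  forall c, smooth_curve_on sphere c -> c 0 = y ->
    derivable (g \o c) 0 1 /\ derive1 (g \o c) 0 = 0.

Definition two_critical (g : E -> R) (y : E) : Prop :=
  one_critical g y /\
  forall c, smooth_curve_on sphere c -> c 0 = y ->
    derivable (derive1 (g \o c)) 0 1 /\ 0 <= derive1n 2 (g \o c) 0.

(* k-times (Frechet) differentiable f : R^n -> R, k = 1, 2.
   Twice differentiable: f differentiable and its gradient map differentiable
   (equivalent to x |-> Df(x) differentiable, in finite dimension). *)
Definition gradient (f : E -> R) (x : E) : E := \row_i 'd f x (delta_mx ord0 i).

Definition k_differentiable (k : nat) (f : E -> R) : Prop :=
  match k with
  | 0 => True
  | 1 => forall x, differentiable f x
  | _ => (forall x, differentiable f x) /\ (forall x, differentiable (gradient f) x)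
  end.

Definition local_local (y : E) : Prop :=
  forall f : E -> R, {within simplex, continuous f} ->
    local_min_on sphere (f \o sqlift) y -> local_min_on simplex f (sqlift y).

Definition one_to_one (y : E) : Prop :=
  forall f : E -> R, k_differentiable 1 f ->
    one_critical (f \o sqlift) y -> stationary f simplex (sqlift y).

Definition two_to_one (y : E) : Prop :=
  forall f : E -> R, k_differentiable 2 f ->
    two_critical (f \o sqlift) y -> stationary f simplex (sqlift y).

End Defs.

(* Main.v *)
Require Import Defs.
From HB Require Import structures.
From mathcomp Require Import all_boot all_order all_algebra.
From mathcomp Require Import all_classical all_reals topology normedtype sequences derive.
From mathcomp Require Import realfun trigo.
From mathcomp Require Import ring lra.
Import Order.TTheory GRing.Theory Num.Theory.
Import numFieldNormedType.Exports.
Local Open Scope classical_set_scope.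
Local Open Scope ring_scope.

Section S.
Variables (R : realType) (n : nat).
Local Notation E := 'rV[R]_n.

Lemma scal_is_derive (k : R -> R) (A : E) (t dk : R) :
  is_derive t (1:R) k dk -> is_derive t (1:R) (fun z => k z *: A) (dk *: A).
Proof.
move=> [dk1 <-].
have dk2 : differentiable k t by apply/derivable1_diffP.
have d3 : differentiable (fun z => k z *: A) t by apply: differentiableZl.
split; first by apply/derivable1_diffP.
by rewrite deriveE // diffZl // -deriveE.
Qed.

Definition K (C A B : E) : R -> E := fun t => C + cos t *: A + sin t *: B.

Lemma K_is_derive C A B (t : R) : is_derive t (1:R) (K C A B) (K 0 B (-A) t).
Proof.
have -> : K C A B = (cst C + (fun z => cos z *: A)) + (fun z => sin z *: B).
  by apply/funext => z.
have H1 := @scal_is_derive sin B t _ (is_derive_sin t).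
have H2 := @scal_is_derive cos A t _ (is_derive_cos t).
have H0 := @is_derive_cst R R E C t 1.
have H := is_deriveD (is_deriveD H0 H2) H1.
apply: (is_derive_eq H).
by rewrite /K !add0r scalerN scaleNr addrC.
Qed.

Lemma K_derive1 C A B : derive1 (K C A B) = K 0 B (-A).
Proof. by apply/funext => t; rewrite derive1E (@derive_val _ _ _ _ _ _ _ (K_is_derive C A B t)). Qed.

Lemma K_smooth C A B k t : derivable (derive1n k (K C A B)) t 1.
Proof.
elim: k C A B => [|k IH] C A B; first by case: (K_is_derive C A B t).
by rewrite derive1Sn K_derive1.
Qed.

Definition ee (k : 'I_n) : E := delta_mx ord0 k.

Lemma ee_entry k l : ee k ord0 l = (l == k)%:R.
Proof. by rewrite /ee mxE eqxx. Qed.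

Lemma chain (f : E -> R) (x : E) (al be : R -> R) i j (t da db : R) :
  (forall z, differentiable f z) -> is_derive t (1:R) al da -> is_derive t (1:R) be db ->
  is_derive t (1:R) (fun s => f (x + al s *: ee i + be s *: ee j))
    (da * gradient f (x + al t *: ee i + be t *: ee j) ord0 i +
     db * gradient f (x + al t *: ee i + be t *: ee j) ord0 j).
Proof.
move=> df Ha Hb.
set g := fun s => x + al s *: ee i + be s *: ee j.
have Hg : is_derive t (1:R) g (da *: ee i + db *: ee j).
  have H0 := @is_derive_cst R R E x t 1.
  have H1 := @scal_is_derive al (ee i) t da Ha.
  have H2 := @scal_is_derive be (ee j) t db Hb.
  have -> : g = (cst x + (fun z => al z *: ee i)) + (fun z => be z *: ee j).
    by apply/funext.
  apply: (is_derive_eq (is_deriveD (is_deriveD H0 H1) H2)).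
  by rewrite add0r.
have dg : differentiable g t.
  by apply/derivable1_diffP; case: Hg.
have dfg : differentiable (f \o g) t.
  apply: differentiable_comp; [exact: dg | exact: (df (g t))].
split.
  by apply/derivable1_diffP.
rewrite (deriveE (f := f \o g)) // diff_comp; try exact: dg; try exact: (df (g t)).
rewrite /= -(deriveE (f := g)) // (@derive_val _ _ _ _ _ _ _ Hg).
by rewrite linearD !linearZ /= /gradient !mxE.
Qed.

Definition rotc (y : E) i j : R -> E :=
  K (y - (y ord0 i *: ee i + y ord0 j *: ee j))
    (y ord0 i *: ee i + y ord0 j *: ee j) (y ord0 i *: ee j - y ord0 j *: ee i).

Lemma rotc_entry y i j t k : i != j ->
  rotc y i j t ord0 k = if k == i then cos t * y ord0 i - sin t * y ord0 j
                        else if k == j then sin t * y ord0 i + cos t * y ord0 j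
                        else y ord0 k.
Proof.
move=> ij; rewrite /rotc /K !mxE eqxx /=.
have [->|ki] := eqVneq k i.
  rewrite (negbTE ij) /=; ring.
have [->|kj] := eqVneq k j; by rewrite /=; ring.
Qed.

Lemma rotc0 y i j : rotc y i j 0 = y.
Proof. by rewrite /rotc /K cos0 sin0 scale1r scale0r addr0 subrK. Qed.

Lemma sum_two (F : 'I_n -> R) i j : i != j ->
  \sum_k F k = F i + F j + \sum_(k | (k != i) && (k != j)) F k.
Proof.
move=> ij; rewrite (bigD1 i) //= (bigD1 j) /=; last by rewrite eq_sym.
by rewrite addrA.
Qed.

Lemma rotc_sphere y i j t : i != j -> sphere y -> sphere (rotc y i j t).
Proof.
move=> ij; rewrite /sphere /= => <-.
rewrite (@sum_two _ _ _ ij) [in RHS](@sum_two _ _ _ ij) !rotc_entry // eqxx.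
rewrite eq_sym (negbTE ij) eqxx.
rewrite (eq_bigr (fun k => y ord0 k ^+ 2)); last first.
  by move=> k /andP [ki kj]; rewrite rotc_entry // (negbTE ki) (negbTE kj).
congr (_ + _).
have -> : (cos t * y ord0 i - sin t * y ord0 j) ^+ 2 + (sin t * y ord0 i + cos t * y ord0 j) ^+ 2
   = (cos t ^+ 2 + sin t ^+ 2) * (y ord0 i ^+ 2 + y ord0 j ^+ 2) by ring.
by rewrite cos2Dsin2 mul1r.
Qed.

Lemma rotc_smooth y i j : i != j -> sphere y -> smooth_curve_on (@sphere R n) (rotc y i j).
Proof.
move=> ij sy; split; first by move=> t; exact: rotc_sphere.
by move=> k t; exact: K_smooth.
Qed.

Definition alf (y : E) i j (t : R) := (cos t * y ord0 i - sin t * y ord0 j) ^+ 2 - y ord0 i ^+ 2.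
Definition bet (y : E) i j (t : R) := (sin t * y ord0 i + cos t * y ord0 j) ^+ 2 - y ord0 j ^+ 2.

Lemma sqlift_rotc y i j t : i != j ->
  sqlift (rotc y i j t) = sqlift y + alf y i j t *: ee i + bet y i j t *: ee j.
Proof.
move=> ij; apply/rowP => k; rewrite mxE rotc_entry // !mxE eqxx /=.
rewrite /alf /bet.
have [->|ki] := eqVneq k i.
  rewrite (negbTE ij) /=; ring.
have [->|kj] := eqVneq k j; by rewrite /=; ring.
Qed.

Lemma lin_is_derive (a b t : R) :
  is_derive t (1:R) (fun s => cos s * a + sin s * b) (cos t * b - sin t * a).
Proof.
have H := is_deriveD (is_deriveZ a (is_derive_cos t)) (is_deriveZ b (is_derive_sin t)).
have -> : (fun s => cos s * a + sin s * b) = a \*: cos + b \*: sin.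
  by apply/funext => s /=; rewrite mulrC [sin s * _]mulrC.
apply: (is_derive_eq H).
rewrite /GRing.scale /=; ring.
Qed.

Lemma sq_is_derive (p : R -> R) (c t dp : R) :
  is_derive t (1:R) p dp -> is_derive t (1:R) (fun s => p s ^+ 2 - c) (2 * p t * dp).
Proof.
move=> Hp.
have H := is_deriveB (is_deriveX 2 Hp) (@is_derive_cst R R R c t 1).
have -> : (fun s => p s ^+ 2 - c) = p ^+ 2 - cst c.
  by apply/funext => s /=; rewrite !expr2.
apply: (is_derive_eq H).
rewrite /GRing.scale /= subr0; ring.
Qed.

Definition DA (y : E) i j (t : R) :=
  2 * (cos t * y ord0 i - sin t * y ord0 j) * (cos t * (- y ord0 j) - sin t * y ord0 i).
Definition DB (y : E) i j (t : R) :=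
  2 * (cos t * y ord0 j + sin t * y ord0 i) * (cos t * y ord0 i - sin t * y ord0 j).

Lemma alf_is_derive y i j t : is_derive t (1:R) (alf y i j) (DA y i j t).
Proof.
have H := @sq_is_derive _ (y ord0 i ^+ 2) t _ (lin_is_derive (y ord0 i) (- y ord0 j) t).
have -> : alf y i j = (fun s => (cos s * y ord0 i + sin s * (- y ord0 j)) ^+ 2 - y ord0 i ^+ 2).
  by apply/funext => s; rewrite /alf mulrN.
by apply: (is_derive_eq H); rewrite /DA mulrN.
Qed.

Lemma bet_is_derive y i j t : is_derive t (1:R) (bet y i j) (DB y i j t).
Proof.
have H := @sq_is_derive _ (y ord0 j ^+ 2) t _ (lin_is_derive (y ord0 j) (y ord0 i) t).
have -> : bet y i j = (fun s => (cos s * y ord0 j + sin s * y ord0 i) ^+ 2 - y ord0 j ^+ 2).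
  by apply/funext => s; rewrite /bet [sin s * _ + _]addrC.
by apply: (is_derive_eq H); rewrite /DB.
Qed.

Definition gam (y : E) i j (t : R) : E := sqlift y + alf y i j t *: ee i + bet y i j t *: ee j.

Lemma key_derive (f : E -> R) y i j t : i != j -> (forall z, differentiable f z) ->
  is_derive t (1:R) ((f \o @sqlift R n) \o rotc y i j)
    (DA y i j t * gradient f (gam y i j t) ord0 i + DB y i j t * gradient f (gam y i j t) ord0 j).
Proof.
move=> ij df.
have -> : (f \o @sqlift R n) \o rotc y i j = fun s => f (sqlift y + alf y i j s *: ee i + bet y i j s *: ee j).
  by apply/funext => s /=; rewrite sqlift_rotc.
exact: chain df (alf_is_derive y i j t) (bet_is_derive y i j t).
Qed.

Lemma key_derive1 (f : E -> R) y i j : i != j -> (forall z, differentiable f z) ->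
  derive1 ((f \o @sqlift R n) \o rotc y i j) = fun t =>
    (DA y i j t * gradient f (gam y i j t) ord0 i + DB y i j t * gradient f (gam y i j t) ord0 j).
Proof.
move=> ij df; apply/funext => t.
by rewrite derive1E (@derive_val _ _ _ _ _ _ _ (@key_derive f y i j t ij df)).
Qed.

Lemma gam0 y i j : gam y i j 0 = sqlift y.
Proof. by rewrite /gam /alf /bet cos0 sin0 !mul1r !mul0r ?subr0 ?addr0 ?add0r !subrr !scale0r !addr0. Qed.

Lemma crit1 (f : E -> R) y i j : i != j -> (forall z, differentiable f z) ->
  one_critical (f \o @sqlift R n) y ->
  y ord0 i * y ord0 j * (gradient f (sqlift y) ord0 j - gradient f (sqlift y) ord0 i) = 0.
Proof.
move=> ij df [sy H].
have [_ ] := H _ (@rotc_smooth y i j ij sy) (rotc0 y i j).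
rewrite (@key_derive1 f y i j ij df) gam0 /DA /DB cos0 sin0 => E.
have : 2 * (y ord0 i * y ord0 j * (gradient f (sqlift y) ord0 j - gradient f (sqlift y) ord0 i)) = 0 by rewrite -E; ring.
by move/eqP; rewrite mulf_eq0 pnatr_eq0 orFb => /eqP.
Qed.

Lemma sinc_cvg : (fun h : R => h^-1 * sin h) @ 0^' --> (1:R).
Proof.
have Hc := @ex_derive _ _ _ (0:R) (1:R) sin _ (is_derive_sin (0:R)).
have E := @derive_val _ _ _ _ _ _ _ (is_derive_sin (0:R)).
rewrite /derivable in Hc; rewrite /derive in E.
rewrite E cos0 in Hc.
have -> : (fun h : R => h^-1 * sin h) = (fun h : R => h^-1 *: ((sin \o shift 0) (h *: 1) - sin 0)).
  by apply/funext => h /=; rewrite sin0 subr0 [h%:A]mulr1 addr0.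
exact: Hc.
Qed.

Lemma curve_is_derive (x : E) (al be : R -> R) i j (t da db : R) :
  is_derive t (1:R) al da -> is_derive t (1:R) be db ->
  is_derive t (1:R) (fun s => x + al s *: ee i + be s *: ee j) (da *: ee i + db *: ee j).
Proof.
move=> Ha Hb.
have H0 := @is_derive_cst R R E x t 1.
have H1 := @scal_is_derive al (ee i) t da Ha.
have H2 := @scal_is_derive be (ee j) t db Hb.
have -> : (fun s => x + al s *: ee i + be s *: ee j) =
   (cst x + (fun z => al z *: ee i)) + (fun z => be z *: ee j).
  by apply/funext.
apply: (is_derive_eq (is_deriveD (is_deriveD H0 H1) H2)).
by rewrite add0r.
Qed.

Lemma gam_cont y i j : gam y i j t @[t --> (0:R)] --> gam y i j 0.
Proof.
have H := @curve_is_derive (sqlift y) _ _ i j _ _ _ (alf_is_derive y i j 0) (bet_is_derive y i j 0).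
apply: differentiable_continuous.
by apply/derivable1_diffP; case: H.
Qed.

Lemma scaleR (a b : R) : a *: b = a * b. Proof. by []. Qed.

Lemma crit2 (f : E -> R) y i j : i != j -> k_differentiable 2 f ->
  two_critical (f \o @sqlift R n) y -> y ord0 j = 0 ->
  0 <= y ord0 i ^+ 2 * (gradient f (sqlift y) ord0 j - gradient f (sqlift y) ord0 i).
Proof.
move=> ij [df dG] [[sy H1] H2] yj0.
have [_ ] := H2 _ (@rotc_smooth y i j ij sy) (rotc0 y i j).
set G := fun t k => gradient f (gam y i j t) ord0 k.
have Ck k : G t k @[t --> (0:R)] --> gradient f (sqlift y) ord0 k.
  have Cgr : gradient f (gam y i j t) @[t --> (0:R)] --> gradient f (sqlift y).
    have := continuous_cvg _ (differentiable_continuous (dG (gam y i j 0))) (gam_cont y i j).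
    move=> H; have H3 := H (nbhs_filter 0); rewrite gam0 in H3; exact: H3.
  exact: (continuous_cvg _ (@coord_continuous _ _ _ ord0 k _) Cgr).
set Q := fun h : R => 2 * cos h * y ord0 i ^+ 2 * (G h j - G h i).
have HQ : Q h @[h --> (0:R)] --> 2 * cos 0 * y ord0 i ^+ 2 * (gradient f (sqlift y) ord0 j - gradient f (sqlift y) ord0 i).
  apply: cvgM; last by apply: cvgB; exact: Ck.
  apply: cvgM; last exact: cvg_cst.
  apply: cvgM; first exact: cvg_cst.
  exact: continuous_cos.
have HQ' := @cvg_within_filter _ _ _ _ (nbhs_filter 0) _ (fun x : R => x != 0) HQ.
have HP := cvgM sinc_cvg HQ'.
suff -> : derive1n 2 ((f \o @sqlift R n) \o rotc y i j) 0 =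
   1 * (2 * cos 0 * y ord0 i ^+ 2 * (gradient f (sqlift y) ord0 j - gradient f (sqlift y) ord0 i)).
  rewrite cos0 mul1r mulr1 -mulrA => H; rewrite -(@pmulr_rge0 _ 2) //.
rewrite /derive1n /= (@key_derive1 f y i j ij df) /derive1.
apply: cvg_lim => //.
rewrite (eq_cvg _ _ (g := (fun h : R => h^-1 * sin h) \* Q)); first exact: (HP (dnbhs_filter 0)).
move=> h /=; rewrite scaleR addr0 /Q /G /DA /DB yj0 cos0 sin0 gam0.
have alg : forall (a b c d yi s co hi : R),
  hi * (2 * (co * yi - s * 0) * (co * - 0 - s * yi) * a +
   2 * (co * 0 + s * yi) * (co * yi - s * 0) * b -
   (2 * (1 * yi - 0 * 0) * (1 * - 0 - 0 * yi) * c + 2 * (1 * 0 + 0 * yi) * (1 * yi - 0 * 0) * d))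
  = hi * s * (2 * co * yi ^+ 2 * (b - a)).
  by move=> *; ring.
exact: alg.
Qed.


Lemma cvg_bigsum (r : seq 'I_n) (g : 'I_n -> nat -> R) (l : 'I_n -> R) :
  (forall k, g k m @[m --> \oo] --> l k) ->
  (\sum_(k <- r) g k m) @[m --> \oo] --> \sum_(k <- r) l k.
Proof.
move=> H; elim: r => [|a r IH].
  rewrite big_nil (eq_cvg _ _ (g := fun _ => 0)); first exact: cvg_cst.
  by move=> m; rewrite big_nil.
rewrite big_cons (eq_cvg _ _ (g := (g a) + (fun m => \sum_(k <- r) g k m))).
  exact: cvgD.
by move=> m; rewrite big_cons.
Qed.

Lemma tc_coord (X : set E) x v : tangent_cone X x v ->
  exists (u : nat -> E) (tau : nat -> R), (forall m, X (u m)) /\ (forall m, 0 < tau m) /\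
   forall k, ((fun m => (tau m)^-1 * (u m ord0 k - x ord0 k)) @ \oo --> v ord0 k).
Proof.
move=> [u [tau [Xu [tau0 [_ Hc]]]]]; exists u, tau; split => //; split => // k.
have := continuous_cvg _ (@coord_continuous _ _ _ ord0 k v) Hc.
move=> H; have H3 := H (eventually_filter); move: H3.
by rewrite (eq_cvg _ _ (g := fun m => (tau m)^-1 * (u m ord0 k - x ord0 k))) // => m /=; rewrite !mxE.
Qed.

Lemma tc_sum x v : simplex x -> tangent_cone (@simplex R n) x v -> \sum_k v ord0 k = 0.
Proof.
move=> sx /tc_coord [u [tau [Xu [tau0 Hk]]]].
have Hs := @cvg_bigsum (index_enum _) _ _ Hk.
rewrite (eq_cvg _ _ (g := fun _ => 0)) in Hs; last first.
  move=> m; rewrite -mulr_sumr sumrB (Xu m).2 sx.2 subrr mulr0 //.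
by move/(cvg_lim (@Rhausdorff R)) : Hs; rewrite lim_cst.
Qed.

Lemma tc_nonneg x v k : tangent_cone (@simplex R n) x v -> x ord0 k = 0 -> 0 <= v ord0 k.
Proof.
move=> /tc_coord [u [tau [Xu [tau0 Hk]]]] xk0.
have Hn : \forall m \near \oo, 0 <= (tau m)^-1 * (u m ord0 k - x ord0 k).
  apply: nearW => m; rewrite xk0 subr0; apply: mulr_ge0; [rewrite invr_ge0; exact: ltW | exact: (Xu m).1].
have := limr_ge (cvgP _ (Hk k)) Hn.
move=> /(_ eventually_filter). by rewrite (cvg_lim (@Rhausdorff R) (Hk k)).
Qed.

Lemma d_expand (f : E -> R) x v :
  'd f x v = \sum_k v ord0 k * gradient f x ord0 k.
Proof.
rewrite {1}(row_sum_delta v) linear_sum; apply: eq_bigr => k _.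
by rewrite linearZ /gradient mxE /=.
Qed.

Lemma simplex_sqlift y : sphere y -> simplex (@sqlift R n y).
Proof.
move=> sy; split; first by move=> k; rewrite mxE sqr_ge0.
by rewrite -sy; apply: eq_bigr => k _; rewrite mxE.
Qed.

Lemma final (f : E -> R) y : sphere y ->
  (forall i j, y ord0 i != 0 -> y ord0 j != 0 -> gradient f (sqlift y) ord0 i = gradient f (sqlift y) ord0 j) ->
  (forall i j, y ord0 i != 0 -> y ord0 j = 0 -> gradient f (sqlift y) ord0 i <= gradient f (sqlift y) ord0 j) ->
  stationary f (@simplex R n) (sqlift y).
Proof.
move=> sy Heq Hle; split; first exact: simplex_sqlift.
move=> v tv.
have [i0 yi0] : exists i, y ord0 i != 0.
  case: (pickP (fun i => y ord0 i != 0)) => [i0 H|H]; first by exists i0.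
  move: sy; rewrite /sphere /= big1 => [/eqP|k _]; first by rewrite eq_sym oner_eq0.
  by move: (H k) => /= /negbFE /eqP ->; rewrite expr0n.
rewrite d_expand.
rewrite (eq_bigr (fun k => v ord0 k * gradient f (sqlift y) ord0 i0 +
   v ord0 k * (gradient f (sqlift y) ord0 k - gradient f (sqlift y) ord0 i0))); last first.
  by move=> k _; ring.
rewrite big_split /= -mulr_suml (@tc_sum _ _ (@simplex_sqlift y sy) tv) mul0r add0r.
apply: sumr_ge0 => k _.
have [yk0|ykn0] := eqVneq (y ord0 k) 0.
  apply: mulr_ge0.
    by apply: (@tc_nonneg _ _ _ tv); rewrite mxE yk0 expr0n.
  by rewrite subr_ge0; apply: Hle.
by rewrite (Heq k i0) // subrr mulr0.
Qed.

Lemma part3 (y : E) : sphere y -> two_to_one y.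
Proof.
move=> sy f f2 H2.
have df : forall z, differentiable f z by case: f2.
have H1 := H2.1.
apply: final => //.
  move=> i j yi yj; have [->//|ij] := eqVneq i j.
  have := @crit1 f y i j ij df H1; move/eqP; rewrite !mulf_eq0 (negbTE yi) (negbTE yj) /=.
  by rewrite subr_eq0 => /eqP ->.
move=> i j yi yj.
have ij : i != j by apply/eqP => eij; move: yi; rewrite eij yj eqxx.
have := @crit2 f y i j ij f2 H2 yj.
by rewrite pmulr_rge0 ?subr_ge0 // lt_neqAle eq_sym sqrf_eq0 yi sqr_ge0.
Qed.

Lemma part2a (y : E) : sphere y -> (forall i, y ord0 i != 0) -> one_to_one y.
Proof.
move=> sy ynz f df H1.
apply: final => //.
  move=> i j yi yj; have [->//|ij] := eqVneq i j.
  have := @crit1 f y i j ij df H1; move/eqP; rewrite !mulf_eq0 (negbTE yi) (negbTE yj) /=.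
  by rewrite subr_eq0 => /eqP ->.
by move=> i j _ yj; move: (ynz j); rewrite yj eqxx.
Qed.

Lemma part2b (y : E) : sphere y -> one_to_one y -> forall i, y ord0 i != 0.
Proof.
move=> sy H i; apply/negP => /eqP yi0.
pose f := fun z : E => - z ord0 i.
have Llin : linear f by move=> a u w; rewrite /f !mxE; rewrite /GRing.scale /=; ring.
pose LM := GRing.isLinear.Build _ _ _ _ _ Llin.
pose L : {linear E -> R} := HB.pack f LM.
have Lc : continuous L.
  by move=> z; have := cvgN (@coord_continuous _ _ _ ord0 i z); move=> /(_ (nbhs_filter z)).
have dL : forall z, 'd L z = L :> (E -> R) by move=> z; apply: diff_lin.
have df : forall z, differentiable L z by move=> z; apply: linear_differentiable.
have Hoc : one_critical (L \o @sqlift R n) y.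
  split => // c [_ cs] c0.
  have dc : derivable c 0 1 := cs 0%N 0.
  set p := fun t => c t ord0 i.
  have dp : derivable p 0 1 by apply: ((derivable_mxP c 0 1).1 dc ord0 i).
  have Hp := derivableP dp.
  have Hn := is_deriveN (@sq_is_derive p 0 0 _ Hp).
  have -> : (L \o @sqlift R n) \o c = - (fun s => p s ^+ 2 - 0).
    apply/funext => s; rewrite /= /f /p mxE; apply: (congr1 -%R); by rewrite subr0.
  split; first exact: (@ex_derive _ _ _ _ _ _ _ Hn).
  rewrite derive1E (@derive_val _ _ _ _ _ _ _ Hn).
  by rewrite /p c0 yi0 mulr0 mul0r oppr0.
have [_ Hs] := H L df Hoc.
pose v := ee i - sqlift y.
have tv : tangent_cone (@simplex R n) (sqlift y) v.
  exists (fun m => sqlift y + harmonic m *: v), harmonic.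
  have h0 m : (0 : R) < harmonic m by apply: harmonic_gt0.
  have h1 m : (harmonic m : R) <= 1.
    by rewrite /harmonic /= invf_le1 ?ler1n // ltr0n.
  have [sx0 sx1] := @simplex_sqlift y sy.
  split.
    move=> m; split.
      move=> k; rewrite !mxE eqxx /=.
      have := h0 m; have := h1 m; rewrite /harmonic /=.
      have := sqr_ge0 (y ord0 k).
      move: (m.+1%:R^-1 : R) (y ord0 k ^+ 2) => a b hb ha1 ha0.
      have : 0 <= (1 - a) * b by apply: mulr_ge0 => //; rewrite subr_ge0.
      by case: (k == i) => /=; lra.
    have sv : \sum_k v ord0 k = 0.
      rewrite /v (eq_bigr (fun k => ee i ord0 k - sqlift y ord0 k)); last by move=> k _; rewrite !mxE.
      have z0 : \sum_(k | k != i) ee i ord0 k = 0.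
        by apply: big1 => k ki; rewrite ee_entry (negbTE ki).
      by rewrite sumrB sx1 (bigD1 i) //= z0 ee_entry eqxx addr0 subrr.
    rewrite (eq_bigr (fun k => sqlift y ord0 k + harmonic m * v ord0 k)); last first.
      by move=> k _; rewrite !mxE.
    by rewrite big_split /= -mulr_sumr sv sx1 mulr0 addr0.
  split; first exact: h0.
  split; first exact: cvg_harmonic.
  rewrite (eq_cvg _ _ (g := fun _ => v)); first exact: cvg_cst.
  by move=> m /=; rewrite addrAC subrr add0r scalerA mulVf ?scale1r // invr_eq0 pnatr_eq0.
have := Hs v tv.
rewrite dL /= /f /v !mxE eqxx yi0 expr0n /= eqxx subr0.
by rewrite oppr_ge0 ler10.
Qed.

Definition sgn (y : E) k : R := if 0 <= y ord0 k then 1 else -1.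
Definition Zf (y : E) (x : E) : E := \row_k (sgn y k * Num.sqrt (x ord0 k)).

Lemma sgn_sq y k : sgn y k ^+ 2 = 1.
Proof. by rewrite /sgn; case: ifP => _; rewrite ?expr1n ?sqrrN ?expr1n. Qed.

Lemma Zf_sqlift y k : sgn y k * Num.sqrt (sqlift y ord0 k) = y ord0 k.
Proof.
rewrite mxE sqrtr_sqr /sgn; case: ifP => h.
  by rewrite mul1r ger0_norm.
by rewrite mulN1r ltr0_norm ?opprK // ltNge h.
Qed.

Lemma sqlift_Zf y x : simplex x -> sqlift (Zf y x) = x.
Proof.
move=> [x0 _]; apply/rowP => k; rewrite !mxE exprMn sgn_sq mul1r sqr_sqrtr //.
Qed.

Lemma sphere_Zf y x : simplex x -> sphere (Zf y x).
Proof.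
move=> sx; rewrite /sphere /= -sx.2; apply: eq_bigr => k _.
by rewrite -[in RHS](@sqlift_Zf y x sx) [RHS]mxE.
Qed.

Lemma part1 (y : E) : sphere y -> local_local y.
Proof.
move=> sy f _ [_ Hmin]; split; first exact: simplex_sqlift.
move: Hmin => /nbhs_ballP [e e0 He].
have Hb : \forall x \near sqlift y, forall b, ball (y ord0 b) e (Zf y x ord0 b).
  apply: (@filter_forall _ _ (fun b (x : E) => ball (y ord0 b) e (Zf y x ord0 b)) _ (nbhs_filter _)) => b.
  have c1 := @coord_continuous _ _ _ ord0 b (sqlift y).
  have c2 := continuous_cvg _ (@sqrt_continuous R _) c1.
  have c3 := @cvgMl_tmp _ _ _ (nbhs_filter _) _ (sgn y b) _ (c2 (nbhs_filter _)).
  have := c3 _ (nbhsx_ballx _ _ e0).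
  rewrite Zf_sqlift => H.
  have H' : nbhs (sqlift y) ((fun x : E => sgn y b * Num.sqrt (x ord0 b)) @^-1` ball (y ord0 b) e) := H.
  apply: (@filterS _ _ (nbhs_filter _) _ _ _ H') => x /=.
  by rewrite mxE.
apply: (@filterS _ _ (nbhs_filter _) _ _ _ Hb) => x Hx sx.
have := He (Zf y x) _ (@sphere_Zf y x sx).
rewrite /= (@sqlift_Zf y x sx); apply.
split => // a b; rewrite (ord1 a); exact: Hx.
Qed.

End S.

Theorem proposition2p5 (R : realType) (n : nat) :
  (forall y : 'rV[R]_n, sphere y -> local_local y) /\
  (forall y : 'rV[R]_n, sphere y -> (one_to_one y <-> forall i : 'I_n, y ord0 i != 0)) /\
  (forall y : 'rV[R]_n, sphere y -> two_to_one y).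
Proof.
split; first by move=> y sy; exact: (@part1 R n y sy).
split; last by move=> y sy; exact: (@part3 R n y sy).
move=> y sy; split; first exact: (@part2b R n y sy).
exact: (@part2a R n y sy).
Qed.
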